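(* Let $\mathcal{H}=(\mathcal{T},\mathsf{SO})$ be a history and let $\mathcal{G}$ be the hyper-polygraph of $\mathcal{H}$. Then $\mathcal{H}$ satisfies Snapshot Isolation if and only if $\mathcal{H}$ satisfies $\textsc{Int}$ and there exists a directed labeled graph compatible with $\mathcal{G}$ whose induced SI graph is acyclic.
   Context: Fix sets $\mathsf{Key}$ of keys and $\mathsf{Val}$ of values. An operation is a read $\mathsf{R}(x,v)$ or write $\mathsf{W}(x,v)$ ($x\in\mathsf{Key}$, $v\in\mathsf{Val}$, each with a unique identifier). A transaction is $(O,\mathsf{po})$ with $O$ a finite non-empty set of operations and $\mathsf{po}$ a strict total order on $O$. A history $\mathcal{H}=(\mathcal{T},\mathsf{SO})$: $\mathcal{T}$ a set of transactions with disjoint operation sets, $\mathsf{SO}$ a union of strict total orders on disjoint subsets of $\mathcal{T}$; it contains a transaction $T_\bot$ writing the initial value of every key and $\mathsf{SO}$-preceding all other transactions. $T\vdash\mathsf{W}(x,v)$: $T$ writes $x$ and its $\mathsf{po}$-last write to $x$ has value $v$. $T\vdash\mathsf{R}(x,v)$: $T$ reads $x$ before any write of $T$ to $x$ and the first such read returns $v$. $\mathsf{WriteTx}_x=\{T\mid T\vdash\mathsf{W}(x,\_)\}$. $\textsc{Int}$: in every transaction, every read of $x$ that is $\mathsf{po}$-preceded by an operation on $x$ returns the value of the $\mathsf{po}$-latest such preceding operation. Dependency graph: $(\mathcal{T},\mathsf{SO},\mathsf{WR},\mathsf{WW},\mathsf{RW})$ with, for each key $x$: $\mathsf{WR}(x)\subseteq\mathcal{T}\times\mathcal{T}$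 such that every $S$ with $S\vdash\mathsf{R}(x,\_)$ has exactly one $T$ with $(T,S)\in\mathsf{WR}(x)$, and $(T,S)\in\mathsf{WR}(x)$ implies $T\neq S$ and $T\vdash\mathsf{W}(x,v)$, $S\vdash\mathsf{R}(x,v)$ for some $v$; $\mathsf{WW}(x)$ a strict total order on $\mathsf{WriteTx}_x$; $(T,S)\in\mathsf{RW}(x)$ iff $T\neq S$ and there is $T'$ with $(T',T)\in\mathsf{WR}(x)$ and $(T',S)\in\mathsf{WW}(x)$. Snapshot Isolation is taken (following Cerone and Gotsman) as: $\mathcal{H}$ satisfies SI iff $\mathcal{H}\models\textsc{Int}$ and there is a dependency graph extending $\mathcal{H}$ such that $(\mathsf{SO}\cup\mathsf{WR}\cup\mathsf{WW})\,;\,\mathsf{RW}^{?}$ is acyclic, where $\mathsf{WR},\mathsf{WW},\mathsf{RW}$ denote unions over keys, $;$ is relational composition and $R^{?}$ is the reflexive closure. Hyper-polygraph of $\mathcal{H}$: $\mathcal{G}=(\mathcal{V},\mathcal{E},(\mathcal{C}^{\mathsf{WW}},\mathcal{C}^{\mathsf{WR}}))$, $\mathcal{V}=\mathcal{T}$; edges $T\xrightarrow{\mathsf{t}(x)}S$ with type $\mathsf{t}\in\{\mathsf{SO},\mathsf{WR},\mathsf{WW},\mathsf{RW}\}$ and key $x$; $\mathcal{E}$ contains $T\xrightarrow{\mathsf{SO}}S$ for $(T,S)\in\mathsf{SO}$ and $T\xrightarrow{\mathsf{WR}(x)}S$ whenever $S\vdash\mathsf{R}(x,v)$ and $T$ is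 the unique transaction with $T\vdash\mathsf{W}(x,v)$; $\mathcal{C}^{\mathsf{WW}}=\{\{T\xrightarrow{\mathsf{WW}(x)}S,S\xrightarrow{\mathsf{WW}(x)}T\}\mid T\neq S\in\mathsf{WriteTx}_x\}$; $\mathcal{C}^{\mathsf{WR}}=\{\{T_i\xrightarrow{\mathsf{WR}(x)}S\mid T_i\vdash\mathsf{W}(x,v)\}\mid S\vdash\mathsf{R}(x,v)\}$. A graph $(\mathcal{V}',\mathcal{E}')$ is compatible with $\mathcal{G}$ if $\mathcal{V}'=\mathcal{V}$, $\mathcal{E}'\supseteq\mathcal{E}$, for all $x$ and $T,T',S$ with $T\neq S$: $T'\xrightarrow{\mathsf{WR}(x)}T\in\mathcal{E}'$ and $T'\xrightarrow{\mathsf{WW}(x)}S\in\mathcal{E}'$ imply $T\xrightarrow{\mathsf{RW}(x)}S\in\mathcal{E}'$, and $|\mathcal{E}'\cap C|=1$ for every $C\in\mathcal{C}^{\mathsf{WW}}\cup\mathcal{C}^{\mathsf{WR}}$. For such a graph, writing $\mathcal{E}'_{\mathsf{t}}\subseteq\mathcal{V}'\times\mathcal{V}'$ for the vertex pairs joined by an edge of type $\mathsf{t}$ (ignoring keys), its induced SI graph is $(\mathcal{V}',(\mathcal{E}'_{\mathsf{SO}}\cup\mathcal{E}'_{\mathsf{WR}}\cup\mathcal{E}'_{\mathsf{WW}})\,;\,\mathcal{E}'^{?}_{\mathsf{RW}})$. Acyclic means no directed cycle (including self-loops). *)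

(* Defs.v *)
From Stdlib Require Import List Relations.
Import ListNotations.
Set Implicit Arguments.

Section Defs.
Variables (Key Val : Type).

Inductive op_kind := OpR | OpW.
Record Op := mkOp { okind : op_kind; okey : Key; oval : Val; oid : nat }.

Variable Tx : Type.
(** A transaction T is given by the list [ops T] of its operations, listed in
    program order po (list order is the strict total order po). *)
Variable ops : Tx -> list Op.

(** T |- W(x,v): T writes x and its po-last write to x has value v. *)
Definition writes (T : Tx) (x : Key) (v : Val) : Prop :=
  exists l1 o l2, ops T = l1 ++ o :: l2 /\ okind o = OpW /\ okey o = x /\
    oval o = v /\ (forall o', In o' l2 -> ~ (okind o' = OpW /\ okey o' = x)).

(** T |- R(x,v): T reads x before any write of T to x, and the first such read
    returns v (i.e. the po-first operation of T on x is a read returning v). *)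
Definition reads (T : Tx) (x : Key) (v : Val) : Prop :=
  exists l1 o l2, ops T = l1 ++ o :: l2 /\ okind o = OpR /\ okey o = x /\
    oval o = v /\ (forall o', In o' l1 -> okey o' <> x).

Definition WriteTx (x : Key) (T : Tx) : Prop := exists v, writes T x v.

(** INT: every read of x po-preceded by an operation on x returns the value of
    the po-latest such preceding operation. *)
Definition Int : Prop :=
  forall T l1 p l2 o l3, ops T = l1 ++ p :: l2 ++ o :: l3 ->
    okind o = OpR -> okey p = okey o ->
    (forall q, In q l2 -> okey q <> okey o) ->
    oval o = oval p.

Definition strict_total_order_on (D : Tx -> Prop) (R : Tx -> Tx -> Prop) : Prop :=
  (forall T S, R T S -> D T /\ D S) /\
  (forall T, ~ R T T) /\
  (forall T S U, R T S -> R S U -> R T U) /\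
  (forall T S, D T -> D S -> T <> S -> R T S \/ R S T).

Definition is_history (SO : Tx -> Tx -> Prop) (Tbot : Tx) : Prop :=
  (* transactions: finite non-empty sets of operations with po *)
  (forall T, ops T <> [] /\ NoDup (ops T)) /\
  (forall T S o, T <> S -> In o (ops T) -> ~ In o (ops S)) /\
  (forall x, exists v, writes Tbot x v) /\
  (exists (I : Type) (D : I -> Tx -> Prop) (R : I -> Tx -> Tx -> Prop),
     (forall i j T, D i T -> D j T -> i = j) /\
     (forall i, ~ D i Tbot) /\
     (forall i, strict_total_order_on (D i) (R i)) /\
     (forall T S, SO T S <-> ((T = Tbot /\ S <> Tbot) \/ exists i, R i T S))).

Definition acyclic (R : Tx -> Tx -> Prop) : Prop :=
  forall T, ~ clos_trans Tx R T T.
Definition rcomp (R1 R2 : Tx -> Tx -> Prop) : Tx -> Tx -> Prop :=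
  fun T S => exists U, R1 T U /\ R2 U S.
Definition refl_clos (R : Tx -> Tx -> Prop) : Tx -> Tx -> Prop :=
  fun T S => T = S \/ R T S.
Definition runion (R1 R2 : Tx -> Tx -> Prop) : Tx -> Tx -> Prop :=
  fun T S => R1 T S \/ R2 T S.

Definition RW_of (WR WW : Key -> Tx -> Tx -> Prop) (x : Key) : Tx -> Tx -> Prop :=
  fun T S => T <> S /\ exists T', WR x T' T /\ WW x T' S.

Definition is_dep_graph (WR WW : Key -> Tx -> Tx -> Prop) : Prop :=
  (forall x S, (exists v, reads S x v) ->
     exists T, WR x T S /\ forall T', WR x T' S -> T' = T) /\
  (forall x T S, WR x T S -> T <> S /\ exists v, writes T x v /\ reads S x v) /\
  (forall x, strict_total_order_on (WriteTx x) (WW x)).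

Definition union_keys (R : Key -> Tx -> Tx -> Prop) : Tx -> Tx -> Prop :=
  fun T S => exists x, R x T S.

Definition satisfies_SI (SO : Tx -> Tx -> Prop) : Prop :=
  Int /\
  exists WR WW, is_dep_graph WR WW /\
    acyclic (rcomp (runion SO (runion (union_keys WR) (union_keys WW)))
                   (refl_clos (union_keys (RW_of WR WW)))).

Inductive label := LSO | LWR (x : Key) | LWW (x : Key) | LRW (x : Key).
Inductive etype := TSO | TWR | TWW | TRW.
Definition ltype (l : label) : etype :=
  match l with LSO => TSO | LWR _ => TWR | LWW _ => TWW | LRW _ => TRW end.
Definition edge : Type := (Tx * label * Tx)%type.

(** Hyper-polygraph (V, E, (C^WW, C^WR)); the vertex set V is all of Tx. *)
Record hyper_polygraph := {
  hp_E : edge -> Prop;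
  hp_CWW : (edge -> Prop) -> Prop;
  hp_CWR : (edge -> Prop) -> Prop }.

Definition hyper_polygraph_of (SO : Tx -> Tx -> Prop) : hyper_polygraph := {|
  hp_E := fun e =>
    (exists T S, e = (T, LSO, S) /\ SO T S) \/
    (exists x T S v, e = (T, LWR x, S) /\ reads S x v /\ writes T x v /\
       (forall T', writes T' x v -> T' = T));
  hp_CWW := fun C => exists x T S, T <> S /\ WriteTx x T /\ WriteTx x S /\
    (forall e, C e <-> (e = (T, LWW x, S) \/ e = (S, LWW x, T)));
  hp_CWR := fun C => exists x S v, reads S x v /\
    (forall e, C e <-> exists Ti, writes Ti x v /\ e = (Ti, LWR x, S)) |}.

(** A labeled graph (V', E') with V' = Tx, given by its edge set E',
    compatible with G. *)
Definition compatible (G : hyper_polygraph) (E' : edge -> Prop) : Prop :=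
  (forall e, hp_E G e -> E' e) /\
  (forall x T T' S, T <> S -> E' (T', LWR x, T) -> E' (T', LWW x, S) ->
     E' (T, LRW x, S)) /\
  (forall C, hp_CWW G C \/ hp_CWR G C ->
     exists e, (E' e /\ C e) /\ forall e', E' e' /\ C e' -> e' = e).

Definition edges_of_type (E' : edge -> Prop) (t : etype) : Tx -> Tx -> Prop :=
  fun T S => exists l, ltype l = t /\ E' (T, l, S).

Definition induced_SI (E' : edge -> Prop) : Tx -> Tx -> Prop :=
  rcomp (runion (edges_of_type E' TSO)
           (runion (edges_of_type E' TWR) (edges_of_type E' TWW)))
        (refl_clos (edges_of_type E' TRW)).

End Defs.

(* Main.v *)
Require Import Defs.
From Stdlib Require Import List Relations Classical.
Import ListNotations.

Lemma first_key_unique {A K : Type} (k : A -> K) (x : K) :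
  forall (l1 m1 l2 m2 : list A) o p, l1 ++ o :: l2 = m1 ++ p :: m2 ->
  k o = x -> k p = x -> (forall q, In q l1 -> k q <> x) ->
  (forall q, In q m1 -> k q <> x) -> o = p.
Proof.
  induction l1 as [|a l1 IH]; intros m1 l2 m2 o p E ho hp h1 h2.
  - destruct m1 as [|b m1]; simpl in E; injection E as E1 E2; auto.
    exfalso. apply (h2 b); simpl; auto. congruence.
  - destruct m1 as [|b m1]; simpl in E; injection E as E1 E2.
    + exfalso. apply (h1 a); simpl; auto. congruence.
    + eapply IH; eauto; intros q hq; [apply h1|apply h2]; simpl; auto.
Qed.

Lemma reads_func (Key Val Tx : Type) (ops : Tx -> list (Op Key Val)) S x v v' :
  reads ops S x v -> reads ops S x v' -> v = v'.
Proof.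
  intros (l1 & o & l2 & E1 & k1 & x1 & v1 & h1) (m1 & p & m2 & E2 & k2 & x2 & v2 & h2).
  rewrite E1 in E2.
  assert (o = p) by (eapply (first_key_unique (@okey Key Val)); eauto).
  subst; auto.
Qed.

Arguments reads_func {Key Val Tx ops S x v v'}.

Lemma acyclic_sub (Tx : Type) (R R' : Tx -> Tx -> Prop) :
  (forall a b, R a b -> R' a b) -> acyclic R' -> acyclic R.
Proof.
  intros H A T C. apply (A T).
  assert (G : forall a b, clos_trans Tx R a b -> clos_trans Tx R' a b).
  { intros a b c; induction c; [apply t_step; auto | eapply t_trans; eauto]. }
  auto.
Qed.

Section Main.
Variables (Key Val Tx : Type) (ops : Tx -> list (Op Key Val)).

Lemma ind_of_l (E' : edge Key Tx -> Prop) T l S :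
  E' (T, l, S) -> ltype l <> TRW -> induced_SI E' T S.
Proof.
  intros H Hl. exists S. split; [|left; auto].
  destruct l; simpl in Hl.
  - left. exists (LSO Key); auto.
  - right; left. exists (LWR x); auto.
  - right; right. exists (LWW x); auto.
  - congruence.
Qed.

Lemma st_asym (D : Tx -> Prop) R T S :
  strict_total_order_on D R -> R T S -> R S T -> False.
Proof. intros (_ & irr & tr & _) h1 h2. apply (irr T); eauto. Qed.

Theorem main (SO : Tx -> Tx -> Prop) :
  (satisfies_SI ops SO <->
   Int ops /\
   exists E' : edge Key Tx -> Prop,
     compatible (hyper_polygraph_of ops SO) E' /\ acyclic (induced_SI E')).
Proof.
  split.
  - intros (HI & WR & WW & (D1 & D2 & D3) & Hac). split; [auto|].
    exists (fun e => match e with (T1, l, T2) => match l with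
      | LSO _ => SO T1 T2 | LWR x => WR x T1 T2 | LWW x => WW x T1 T2
      | LRW x => RW_of WR WW x T1 T2 end end).
    split; [split; [|split]|].
    + intros e [(T & S & -> & H)|(x & T & S & v & -> & Hr & Hw & Hu)]; auto.
      destruct (D1 x S (ex_intro _ v Hr)) as (T0 & HT0 & _).
      destruct (D2 _ _ _ HT0) as (_ & v' & Hw' & Hr').
      rewrite <- (reads_func Hr Hr') in Hw'.
      rewrite <- (Hu _ Hw'); auto.
    + intros x T T' S HTS h1 h2. split; eauto.
    + intros C [(x & T & S & HTS & WT & WS & HC)|(x & S & v & Hr & HC)].
      * destruct (proj2 (proj2 (proj2 (D3 x))) T S WT WS HTS) as [h|h].
        -- exists (T, LWW x, S). split; [split; auto; apply HC; auto|].
           intros e' (He & Ce). apply HC in Ce. destruct Ce as [->| ->]; auto.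
           exfalso; eapply st_asym; eauto.
        -- exists (S, LWW x, T). split; [split; auto; apply HC; auto|].
           intros e' (He & Ce). apply HC in Ce. destruct Ce as [->| ->]; auto.
           exfalso; eapply st_asym; eauto.
      * destruct (D1 x S (ex_intro _ v Hr)) as (T0 & HT0 & Hu).
        destruct (D2 _ _ _ HT0) as (_ & v' & Hw' & Hr').
        rewrite <- (reads_func Hr Hr') in Hw'.
        exists (T0, LWR x, S). split; [split; auto; apply HC; eauto|].
        intros e' (He & Ce). apply HC in Ce. destruct Ce as (Ti & _ & ->).
        rewrite (Hu _ He); auto.
    + eapply acyclic_sub; [|exact Hac].
      intros a b (c & h1 & h2). exists c. split.
      * destruct h1 as [(l & Hl & h)|[(l & Hl & h)|(l & Hl & h)]];
          destruct l; simpl in Hl; try discriminate.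
        -- left; auto.
        -- right; left; exists x; auto.
        -- right; right; exists x; auto.
      * destruct h2 as [h|(l & Hl & h)]; [left; auto|right].
        destruct l; simpl in Hl; try discriminate. exists x; auto.
  - intros (HI & E' & (C1 & C2 & C3) & Hac). split; [auto|].
    assert (Hself : forall T l, ltype l <> TRW -> ~ E' (T, l, T)).
    { intros T l Hl H. apply (Hac T). apply t_step. eapply ind_of_l; eauto. }
    exists (fun x T S => E' (T, LWR x, S) /\ exists v, writes ops T x v /\ reads ops S x v).
    exists (fun x T S => E' (T, LWW x, S) /\ WriteTx ops x T /\ WriteTx ops x S).
    assert (Htot : forall x T S, T <> S -> WriteTx ops x T -> WriteTx ops x S ->
              E' (T, LWW x, S) \/ E' (S, LWW x, T)).
    { intros x T S HTS WT WS.
      destruct (C3 (fun e => e = (T, LWW x, S) \/ e = (S, LWW x, T))) as (e & (He & Ce) & _).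
      { left. exists x, T, S. repeat split; auto. }
      destruct Ce as [->| ->]; auto. }
    split; [split; [|split]|].
    + intros x S (v & Hr).
      destruct (C3 (fun e => exists Ti, writes ops Ti x v /\ e = (Ti, LWR x, S)))
        as (e & (He & Ce) & Hu).
      { right. exists x, S, v. split; auto. intro; tauto. }
      destruct Ce as (Ti & Hw & ->).
      exists Ti. split; [split; eauto|].
      intros T' (HE & v' & Hw' & Hr').
      rewrite <- (reads_func Hr Hr') in Hw'.
      assert (E : (T', LWR x, S) = (Ti, LWR x, S)) by (apply Hu; eauto).
      injection E; auto.
    + intros x T S (HE & v & Hw & Hr). split; eauto.
      intros ->. eapply Hself; eauto; simpl; discriminate.
    + intros x. split; [|split; [|split]].
      * intros T S (_ & h1 & h2); auto.
      * intros T (h & _). eapply Hself; eauto; simpl; discriminate.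
      * intros T S U (h1 & wT & wS) (h2 & _ & wU). split; [|auto].
        assert (iTS : induced_SI E' T S) by (eapply ind_of_l; eauto; discriminate).
        assert (iSU : induced_SI E' S U) by (eapply ind_of_l; eauto; discriminate).
        destruct (classic (T = U)) as [->|nTU].
        -- exfalso. apply (Hac U). eapply t_trans; apply t_step; eauto.
        -- destruct (Htot x T U nTU wT wU) as [h|h]; auto.
           exfalso. apply (Hac T). eapply t_trans; [apply t_step; exact iTS|].
           eapply t_trans; apply t_step; [exact iSU|]. eapply ind_of_l; eauto; discriminate.
      * intros T S wT wS HTS. destruct (Htot x T S HTS wT wS); [left|right]; auto.
    + eapply acyclic_sub; [|exact Hac].
      intros a b (c & h1 & h2). exists c. split.
      * destruct h1 as [h|[(x & h & _)|(x & h & _)]].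
        -- left. exists (LSO Key). split; auto. apply C1. left; eauto.
        -- right; left. exists (LWR x); auto.
        -- right; right. exists (LWW x); auto.
      * destruct h2 as [h|(x & HTS & T' & (g1 & _) & (g2 & _))]; [left; auto|right].
        exists (LRW x). split; auto. eapply C2; eauto.
Qed.
End Main.

Theorem theoremA2 (Key Val Tx : Type) (ops : Tx -> list (Op Key Val))
  (SO : Tx -> Tx -> Prop) (Tbot : Tx) :
  is_history ops SO Tbot ->
  (satisfies_SI ops SO <->
   Int ops /\
   exists E' : edge Key Tx -> Prop,
     compatible (hyper_polygraph_of ops SO) E' /\ acyclic (induced_SI E')).
Proof. intros _. apply main. Qed.
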